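(* Let $g$ be a positive integer; suppose that for some $l$ the set $S_l$ contains a consecutive prospective prime pair with gap $g$, and let $j>l+2$. Let $(a,a+g)$ be a consecutive prospective prime pair with gap $g$ in $S_j$. For $0\le m\le P_{j+1}-1$ put $(a_m,a_m+g)=(a+mP_j\#,\,a+g+mP_j\#)$, and call $m$ allowed if both $a_m$ and $a_m+g$ are coprime to $P_{j+1}\#$. Then for each allowed $m$ the pair $(a_m,a_m+g)$ lies in the subset $S_{j+1}^{(m)}$ (so distinct allowed $m$ give pairs in distinct subsets of $S_{j+1}$), and the number of allowed $m$ is $P_{j+1}-1$ if $P_{j+1}\mid g$ and $P_{j+1}-2$ if $P_{j+1}\nmid g$; i.e., the generated pairs occupy, one each, all but one subset of $S_{j+1}$ if $P_{j+1}\mid g$ and all but two subsets otherwise.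
   Context: $P_k$ denotes the $k$-th prime ($P_1=2$), $P_k\#=\prod_{i=1}^kP_i$. $S_k=\{N\in\mathbb{N}:5\le N\le4+P_k\#\}$ and $S_k^{(m)}=\{N:5+mP_{k-1}\#\le N\le 4+(m+1)P_{k-1}\#\}$ for $0\le m\le P_k-1$. A prospective prime in $S_k$ is an $N\in S_k$ coprime to $P_k\#$; prospective primes $a<b$ in $S_k$ are consecutive if no integer strictly between them is coprime to $P_k\#$; a consecutive prospective prime pair with gap $g$ is a pair $(a,a+g)$ of consecutive prospective primes. *)

(* Defs.v *)
From mathcomp Require Import all_boot.
Set Implicit Arguments. Unset Strict Implicit. Unset Printing Implicit Defensive.

Lemma next_prime_ex (n : nat) : exists p, (n < p) && prime p.
Proof. by case: (prime_above n) => p H1 H2; exists p; rewrite H1 H2. Qed.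

Definition next_prime (n : nat) : nat := ex_minn (next_prime_ex n).

(* P k = k-th prime, P 1 = 2 (P 0 = 1 is a dummy value) *)
Fixpoint P (k : nat) : nat :=
  match k with 0 => 1 | k'.+1 => next_prime (P k') end.

Definition primorial (k : nat) : nat := \prod_(1 <= i < k.+1) P i.

Definition inS (k N : nat) : bool := (5 <= N) && (N <= 4 + primorial k).

Definition inSsub (k m N : nat) : bool :=
  (5 + m * primorial k.-1 <= N) && (N <= 4 + m.+1 * primorial k.-1).

Definition prospective (k N : nat) : bool := inS k N && coprime N (primorial k).

Definition consecutive (k a b : nat) : Prop :=
  [/\ prospective k a, prospective k b, a < b &
      forall n, a < n < b -> ~~ coprime n (primorial k)].

Definition cpp_pair (k g a : nat) : Prop := consecutive k a (a + g).

Definition allowed (j g a m : nat) : bool :=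
  coprime (a + m * primorial j) (primorial j.+1) &&
  coprime (a + g + m * primorial j) (primorial j.+1).

(* Main.v *)
Require Import Defs.
From mathcomp Require Import all_boot.
From mathcomp Require Import zify.

Lemma P_step k : P k < P k.+1 /\ prime (P k.+1).
Proof.
rewrite /= /next_prime; case: ex_minnP => m /andP[H1 H2] _; by split.
Qed.

Lemma P_prime k : 0 < k -> prime (P k).
Proof. by case: k => // k _; case: (P_step k). Qed.

Lemma P_mono i k : i < k -> P i < P k.
Proof.
elim: k => // k IH; rewrite ltnS leq_eqVlt => /orP[/eqP->|H].
  by case: (P_step k).
apply: ltn_trans (IH H) _; by case: (P_step k).
Qed.

Lemma coprime_P_prim j : coprime (P j.+1) (primorial j).
Proof.
rewrite /primorial big_seq; apply: (big_ind (fun x => coprime (P j.+1) x)); first by rewrite coprimen1.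
  by move=> x y Hx Hy; rewrite coprimeMr Hx Hy.
move=> i; rewrite mem_index_iota => /andP[Hi1 Hi2].
rewrite prime_coprime; last exact: P_prime.
rewrite dvdn_prime2 ?P_prime //.
have := @P_mono i j.+1 Hi2; by case: eqP => // ->; rewrite ltnn.
Qed.

Lemma count_one p Q c : prime p -> coprime p Q ->
  count (fun m => p %| c + m * Q) (iota 0 p) = 1.
Proof.
move=> pp cpQ.
have p0 : 0 < p by apply: prime_gt0.
have uniq_m : forall m m', p %| c + m * Q -> p %| c + m' * Q -> m <= m' -> m' < p -> m = m'.
  move=> m m' H1 H2 le lt.
  have : p %| (c + m' * Q) - (c + m * Q) by apply: dvdn_sub.
  rewrite subnDl -mulnBl Gauss_dvdl // => H.
  case: (posnP (m' - m)) => Hz; first lia.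
  by have := dvdn_leq Hz H; lia.
case: (Bezoutl Q p0) => x _; rewrite (eqP cpQ) => Hx.
set r := c %% p.
set m0 := (r * x) %% p.
have Hm0 : p %| c + m0 * Q.
  have E : p %| c + (r * x) * Q.
    have -> : c + r * x * Q = c %/ p * p + r * (1 + x * Q).
      rewrite {1}(divn_eq c p) -/r; nia.
    by apply: dvdn_add; [apply: dvdn_mull | apply: dvdn_mull].
  have E2 : c + r * x * Q = (c + m0 * Q) + (r * x) %/ p * Q * p.
    rewrite {1}(divn_eq (r * x) p) -/m0; nia.
  by move: E; rewrite E2 dvdn_addl // dvdn_mull.
have m0lt : m0 < p by rewrite ltn_pmod.
rewrite (@eq_in_count _ _ (pred1 m0)); last first.
  move=> m; rewrite mem_iota add0n => /andP[_ mlt] /=.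
  apply/idP/eqP => [Hm|->//].
  case: (leqP m m0) => le; first by apply: uniq_m.
  by apply/esym/uniq_m => //; apply: ltnW.
by rewrite count_uniq_mem ?iota_uniq // mem_iota m0lt.
Qed.

Theorem lemma2 (g l j a : nat) :
  0 < g ->
  (exists b, cpp_pair l g b) ->
  l + 2 < j ->
  cpp_pair j g a ->
  (forall m, m < P j.+1 -> allowed j g a m ->
     inSsub j.+1 m (a + m * primorial j) &&
     inSsub j.+1 m (a + g + m * primorial j)) /\
  count (allowed j g a) (iota 0 (P j.+1)) =
    (if P j.+1 %| g then (P j.+1).-1 else (P j.+1).-2).
Proof.
move=> g0 _ _ [/andP[/andP[Ha1 Ha2] cA] /andP[/andP[Hb1 Hb2] cB] _ _].
split.
  move=> m _ _; rewrite /inSsub /=.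
  rewrite mulSn; apply/andP; split; apply/andP; split; lia.
set p := P j.+1; set Q := primorial j.
have pp : prime p by apply: P_prime.
have cpQ : coprime p Q by apply: coprime_P_prim.
have p1 : 1 < p by apply: prime_gt1.
have EQ : primorial j.+1 = Q * p.
  by rewrite /primorial big_nat_recr.
have Eal : forall c, coprime c Q -> forall m,
    coprime (c + m * Q) (primorial j.+1) = ~~ (p %| c + m * Q).
  move=> c cc m; rewrite EQ coprimeMr -coprime_modl addnC modnMDl coprime_modl cc /= addnC.
  by rewrite coprime_sym prime_coprime.
have Eall : allowed j g a =1 predC (predU (fun m => p %| a + m * Q)
                                          (fun m => p %| (a + g) + m * Q)).
  by move=> m; rewrite /allowed /= Eal // Eal // negb_or.
rewrite (eq_count Eall).
have H1 := count_predC (predU (fun m => p %| a + m * Q)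
                                (fun m => p %| (a + g) + m * Q)) (iota 0 p).
have H2 := count_predUI (fun m => p %| a + m * Q)
                        (fun m => p %| (a + g) + m * Q) (iota 0 p).
rewrite !count_one // size_iota in H1 H2.
case: ifP => pg.
  have : count (predI (fun m => p %| a + m * Q) (fun m => p %| a + g + m * Q)) (iota 0 p) = 1.
    rewrite -(count_one p Q a pp cpQ); apply: eq_count => m /=.
    by rewrite addnAC (dvdn_addl _ pg) andbb.
  move=> HI; lia.
have : count (predI (fun m => p %| a + m * Q) (fun m => p %| a + g + m * Q)) (iota 0 p) = 0.
  apply/eqP; rewrite -leqn0 leqNgt -has_count; apply/hasPn => m _ /=.
  apply/negP => /andP[d1]; by rewrite addnAC (dvdn_addr _ d1) pg.
lia.
Qed.
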